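(* Let $\kappa\in\mathcal{L}$, let $\lambda_1>0$, $\lambda_2>0$ with $(\lambda_1,\lambda_2)\in\mathcal{R}_2$, and let $u\ge0$. Let $X_1,\dots,X_n$ be i.i.d. samples from $\kappa$ with empirical distribution $\hat\kappa(n)$, and \[ L(\boldsymbol\lambda,m(\kappa),\hat\kappa(n))=\frac1n\sum_{i=1}^n\log\Big(1-(X_i-m(\kappa))\lambda_1-(B-f(|X_i|))\lambda_2\Big). \] Then $\mathbb{P}\big(L(\boldsymbol\lambda,m(\kappa),\hat\kappa(n))\ge u\big)\le e^{-nu}$.
   Context: $\mathcal{P}(\mathbb{R})$: probability distributions on $\mathbb{R}$ with finite mean; $m(\kappa)$: mean. Fix a strictly increasing, continuous, non-negative, convex $f:[0,\infty)\to[0,\infty)$ with $f(y)/y\to\infty$, and $B>0$; $\mathcal{L}=\{\eta\in\mathcal{P}(\mathbb{R}):\mathbb{E}_\eta f(|X|)\le B\}$. $\mathcal{R}_2=\{(\lambda_1,\lambda_2):\lambda_1\ge0,\lambda_2\ge0,\ 1-(y-m(\kappa))\lambda_1-(B-f(|y|))\lambda_2\ge0\ \forall y\in\mathbb{R}\}$ (with $\log 0=-\infty$). *)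

(* Defs.v *)
From HB Require Import structures.
From mathcomp Require Import all_boot all_order all_algebra.
From mathcomp Require Import all_classical all_reals all_analysis.
Set Implicit Arguments. Unset Strict Implicit. Unset Printing Implicit Defensive.
Import Order.TTheory GRing.Theory Num.Theory.
Import numFieldNormedType.Exports.
Local Open Scope classical_set_scope.
Local Open Scope ring_scope.

(* Standing assumptions on f : [0,oo) -> [0,oo) (f given as a function R -> R,
   only its values on [0,oo) matter). *)
Definition admissible_f (R : realType) (f : R -> R) : Prop :=
  [/\ (forall x y, 0 <= x -> x < y -> f x < f y),
      {within `[0, +oo[, continuous f},
      (forall x, 0 <= x -> 0 <= f x),
      (forall x y (t : R), 0 <= x -> 0 <= y -> 0 <= t -> t <= 1 ->
          f (t * x + (1 - t) * y) <= t * f x + (1 - t) * f y)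
    & (fun y => f y / y) @ +oo --> +oo].

Definition finite_mean (R : realType) (k : probability R R) : Prop :=
  k.-integrable setT (fun x => x%:E).

Definition mean (R : realType) (k : probability R R) : R :=
  fine (\int[k]_x x%:E)%E.

Definition in_L (R : realType) (f : R -> R) (B : R) (k : probability R R) : Prop :=
  finite_mean k /\ (\int[k]_x (f `|x|)%:E <= B%:E)%E.

Definition in_R2 (R : realType) (f : R -> R) (B : R) (k : probability R R)
    (l1 l2 : R) : Prop :=
  [/\ 0 <= l1, 0 <= l2 &
      forall y : R, 0 <= 1 - (y - mean k) * l1 - (B - f `|y|) * l2].

Definition iid_with_law (R : realType) d (T : measurableType d)
    (P : probability T R) (n : nat) (X : 'I_n -> T -> R)
    (k : probability R R) : Prop :=
  [/\ (forall i, measurable_fun setT (X i)),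
      (forall i (A : set R), measurable A -> P (X i @^-1` A) = k A) &
      (forall A : 'I_n -> set R, (forall i, measurable (A i)) ->
         P (\bigcap_(i in [set: 'I_n]) (X i @^-1` A i)) =
         (\prod_(i < n) P (X i @^-1` A i))%E)].

(* L(lambda, m, hat kappa(n)) evaluated at the sample X(w); log 0 = -oo *)
Definition Lemp (R : realType) (f : R -> R) (B l1 l2 m : R) (n : nat)
    (x : 'I_n -> R) : \bar R :=
  ((n%:R^-1)%:E *
   \sum_(i < n) lne (1 - (x i - m) * l1 - (B - f `|x i|) * l2)%:E)%E.

(* Main.v *)
Require Import Defs.
From HB Require Import structures.
From mathcomp Require Import all_boot all_order all_algebra.
From mathcomp Require Import all_classical all_reals all_analysis.
From mathcomp Require Import measurable_realfun.
Import Order.TTheory GRing.Theory Num.Theory.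
Import numFieldNormedType.Exports.
Local Open Scope classical_set_scope.
Local Open Scope ring_scope.
Import HBNNSimple.
Lemma sfun_range_ge0 (R : realType) (s : {nnsfun R >-> R}) (i : nat) :
  (i < size (finmap.enum_fset (fset_set (range s))))%N ->
  0 <= (finmap.enum_fset (fset_set (range s)))`_i.
Proof.
set F := finmap.enum_fset _ => hi.
have h : F`_i \in F by apply: mem_nth.
have := in_fset_set (fimfunP s) (F`_i).
rewrite [X in X = _]h => /esym.
by move=> /set_mem [x _ <-]; exact: fun_ge0.
Qed.

Lemma sfun_expand d (T : measurableType d) (R : realType)
  (mu : {measure set T -> \bar R}) (s : {nnsfun R >-> R}) (Y : T -> R) (phi : T -> R) :
  measurable_fun setT Y -> measurable_fun setT phi -> (forall w, 0 <= phi w) ->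
  let F := finmap.enum_fset (fset_set (range s)) in
  (\int[mu]_w (s (Y w) * phi w)%:E =
  \sum_(i < size F) (F`_i)%:E *
     \int[mu]_w (\1_(s @^-1` [set F`_i]) (Y w) * phi w)%:E)%E.
Proof.
move=> mY mphi phi0 F.
have c0 (i : 'I_(size F)) : 0 <= F`_i.
  have h : F`_i \in F by apply: mem_nth.
  have := in_fset_set (fimfunP s) (F`_i).
  rewrite [X in X = _]h => /esym.
  by move=> /set_mem [x _ <-]; exact: fun_ge0.
have mS (i : 'I_(size F)) : measurable (s @^-1` [set F`_i]).
  by rewrite -[_ @^-1` _]setTI; apply: measurable_funP => //.
have mi (i : 'I_(size F)) : measurable_fun setT (fun w => (\1_(s @^-1` [set F`_i]) (Y w) * phi w)).
  apply: measurable_funM => //; apply: measurableT_comp => //; exact: measurable_indic.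
under eq_integral => w _.
  rewrite (fimfunEord s (Y w)) -/F big_distrl /= -sumEFin.
  over.
rewrite ge0_integral_sum //; last first.
- move=> i w _; rewrite lee_fin.
  by rewrite indicE; apply: mulr_ge0 => //; apply: mulr_ge0.
- move=> i; apply/measurable_EFinP; apply: measurable_funM => //.
  apply: measurable_funM => //.
  apply: measurableT_comp => //; exact: measurable_indic.
apply: eq_bigr => i _.
under eq_integral => w _ do rewrite -mulrA EFinM.
rewrite ge0_integralZl_EFin //.
- by move=> w _; rewrite lee_fin indicE; apply: mulr_ge0.
- exact/measurable_EFinP.
Qed.

Lemma sfun_int_k (R : realType) (k : {measure set R -> \bar R}) (s : {nnsfun R >-> R}) :
  let F := finmap.enum_fset (fset_set (range s)) in
  (\int[k]_x (s x)%:E = \sum_(i < size F) (F`_i)%:E * k (s @^-1` [set F`_i]))%E.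
Proof.
move=> F.
under eq_integral do rewrite -[s _]mulr1.
rewrite (@sfun_expand _ _ _ k s id (cst 1) (@measurable_id _ _ _) (measurable_cst _) (fun=> ler01)).
apply: eq_bigr => i _; congr (_ * _)%E.
under eq_integral do rewrite mulr1.
by rewrite integral_indic // ?setIT //.
Qed.

Lemma extend d (T : measurableType d) (R : realType)
  (P : {measure set T -> \bar R}) (k : {measure set R -> \bar R})
  (Y Rest : T -> R) (C : \bar R) (g : R -> R) :
  measurable_fun setT Y -> measurable_fun setT Rest -> (forall w, 0 <= Rest w) ->
  (0 <= C)%E ->
  (forall S, measurable S ->
     (\int[P]_w (\1_S (Y w) * Rest w)%:E <= k S * C)%E) ->
  measurable_fun setT g -> (forall x, 0 <= g x) ->
  (\int[P]_w (g (Y w) * Rest w)%:E <= \int[k]_x (g x)%:E * C)%E.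
Proof.
move=> mY mR R0 C0 hS mg g0.
have simple (s : {nnsfun R >-> R}) :
    (\int[P]_w (s (Y w) * Rest w)%:E <= \int[k]_x (s x)%:E * C)%E.
  rewrite sfun_expand // sfun_int_k ge0_sume_distrl; last first.
    move=> i _; apply: mule_ge0; first by rewrite lee_fin sfun_range_ge0.
    exact: measure_ge0.
  apply: lee_sum => i _; rewrite -muleA; apply: lee_wpmul2l.
    by rewrite lee_fin sfun_range_ge0.
  apply: hS; rewrite -[_ @^-1` _]setTI; exact: measurable_funP.
have mg' : measurable_fun setT (EFin \o g) by exact/measurable_EFinP.
have g0' : forall x, [set: R] x -> (0 <= (EFin \o g) x)%E by move=> x _; rewrite lee_fin.
pose s := nnsfun_approx measurableT mg'.
have sle m x : s m x <= g x.
  by rewrite -lee_fin /s nnsfun_approxE; exact: (le_approx m g0').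
have snd x : {homo (fun m => s m x) : n m / (n <= m)%N >-> n <= m}.
  by move=> a b ab; exact/lefP/nd_nnsfun_approx.
have lim_eq w : (g (Y w) * Rest w)%:E = limn (fun m => (s m (Y w) * Rest w)%:E).
  apply/esym/cvg_lim => //.
  under eq_fun do rewrite EFinM.
  rewrite EFinM; apply: cvgeZr => //.
  exact: (cvg_nnsfun_approx measurableT mg' g0').
under eq_integral do rewrite lim_eq.
rewrite (monotone_convergence P measurableT).
- apply: lime_le.
    apply: ereal_nondecreasing_is_cvgn => a b ab.
    apply: ge0_le_integral => //.
    + by move=> w _; rewrite lee_fin mulr_ge0.
    + apply/measurable_EFinP; apply: measurable_funM => //.
      apply: measurableT_comp => //; exact: measurable_funP.
    + apply/measurable_EFinP; apply: measurable_funM => //.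
      apply: measurableT_comp => //; exact: measurable_funP.
    + by move=> w _; rewrite lee_fin ler_wpM2r // snd.
  apply: nearW => m; apply: (le_trans (simple (s m))).
  apply: lee_wpmul2r => //; apply: ge0_le_integral => //.
  + by move=> x _; rewrite lee_fin.
  + apply/measurable_EFinP; exact: measurable_funP.
  + by move=> x _; rewrite lee_fin sle.
- move=> m; apply/measurable_EFinP; apply: measurable_funM => //.
  apply: measurableT_comp => //; exact: measurable_funP.
- by move=> m w _; rewrite lee_fin mulr_ge0.
- by move=> w _ a b ab; rewrite lee_fin ler_wpM2r // snd.
Qed.

Definition hfun (R : realType) n (g : R -> R) (j : nat) (A : 'I_n -> set R)
  (i : 'I_n) (x : R) : R := if (i < j)%N then g x else \1_(A i) x.
Arguments hfun {R n}.

Lemma mprodP d (T : measurableType d) (R : realType) n (p : pred 'I_n)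
  (h : 'I_n -> T -> R) : (forall i, measurable_fun setT (h i)) ->
  measurable_fun setT (fun w => \prod_(i < n | p i) h i w).
Proof.
move=> mh.
have -> : (fun w => \prod_(i < n | p i) h i w) =
    (fun w => \prod_(i <- index_enum 'I_n) (if p i then h i w else 1)).
  by apply/funext => w; rewrite big_mkcond.
apply: measurable_prod => i _; case: (p i) => //; exact: measurable_cst.
Qed.

Lemma hfun_ge0 (R : realType) n g j A i x : (forall x, 0 <= g x) ->
  0 <= @hfun R n g j A i x.
Proof. by move=> g0; rewrite /hfun; case: ifP => _ //; rewrite indicE. Qed.

Lemma mhfun (R : realType) n g j A i : measurable_fun setT g ->
  (forall i, measurable (A i)) -> measurable_fun setT (@hfun R n g j A i).
Proof.
move=> mg mA; rewrite /hfun; case: (i < j)%N => //; exact: measurable_indic.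
Qed.

Lemma hfun_step (R : realType) n g j A (J : 'I_n) i : val J = j -> i != J ->
  @hfun R n g j.+1 A i = @hfun R n g j A i.
Proof.
move=> hJ ne; rewrite /hfun ltnS leq_eqVlt.
have -> : (val i == j) = false.
  by apply/negbTE; move: ne; apply: contra => /eqP h; apply/eqP/val_inj; rewrite /= h hJ.
by [].
Qed.

Lemma indep_le (R : realType) d (T : measurableType d)
    (P : probability T R) (n : nat) (X : 'I_n -> T -> R)
    (k : probability R R) (g : R -> R) :
  (forall i, measurable_fun setT (X i)) ->
  (forall i (A : set R), measurable A -> P (X i @^-1` A) = k A) ->
  (forall A : 'I_n -> set R, (forall i, measurable (A i)) ->
         P (\bigcap_(i in [set: 'I_n]) (X i @^-1` A i)) =
         (\prod_(i < n) P (X i @^-1` A i))%E) ->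
  measurable_fun setT g -> (forall x, 0 <= g x) ->
  forall j, (j <= n)%N -> forall A, (forall i, measurable (A i)) ->
  (\int[P]_w (\prod_(i < n) hfun g j A i (X i w))%:E <=
     \prod_(i < n) \int[k]_x (hfun g j A i x)%:E)%E.
Proof.
move=> mX hlaw hind mg g0; elim=> [_|j IH jn] A mA.
  have pw w : \prod_(i < n) hfun g 0 A i (X i w) =
      \1_(\bigcap_(i in [set: 'I_n]) (X i @^-1` A i)) w.
    set S := \bigcap_(i in _) _.
    rewrite indicE; case: (boolP (w \in S)) => h.
      rewrite big1 // => i _; rewrite /hfun /= indicE mem_set //.
      by move/set_mem : h; apply.
    have [i Hi] : exists i, ~ (A i (X i w)).
      apply: contrapT => H; move/negP : h; apply; apply/mem_set => i _.
      by apply: contrapT => Hn; apply: H; exists i.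
    by rewrite (bigD1 i) //= /hfun /= indicE memNset // mul0r.
  have mI : measurable (\bigcap_(i in [set: 'I_n]) (X i @^-1` A i)).
    apply: fin_bigcap_measurable; first exact: finite_finset.
    by move=> i _; rewrite -[_ @^-1` _]setTI; exact: mX.
  under eq_integral do rewrite pw.
  rewrite integral_indic // setIT; rewrite le_eqVlt; apply/orP; left; apply/eqP; transitivity (\prod_(i < n) P (X i @^-1` A i))%E; first exact: hind.
  apply: eq_bigr => i _.
  by rewrite /hfun /= integral_indic // setIT hlaw //.
have jn' : (j < n)%N := jn.
pose J := Ordinal jn'.
have hJ : val J = j by [].
have split_p (y : 'I_n -> R) : \prod_(i < n) hfun g j.+1 A i (y i) =
    g (y J) * \prod_(i < n | i != J) hfun g j A i (y i).
  rewrite (bigD1 J) //=; congr (_ * _); first by rewrite /hfun /= ltnSn.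
  by apply: eq_bigr => i ne; rewrite (@hfun_step R n g j A J i hJ ne).
have split_k : (\prod_(i < n) \int[k]_x (hfun g j.+1 A i x)%:E =
    \int[k]_x (g x)%:E * \prod_(i < n | i != J) \int[k]_x (hfun g j A i x)%:E)%E.
  rewrite (bigD1 J) //=; congr (_ * _)%E.
    by apply: eq_integral => x _; rewrite /hfun /= ltnSn.
  by apply: eq_bigr => i ne; rewrite (@hfun_step R n g j A J i hJ ne).
under eq_integral => w _ do rewrite (split_p (fun i => X i w)).
rewrite split_k.
apply: extend.
- exact: mX.
- apply: mprodP => i; apply: measurableT_comp => //; exact: mhfun.
- by move=> w; apply: prodr_ge0 => i _; apply: hfun_ge0.
- by apply: prode_ge0 => i _; apply: integral_ge0 => x _; rewrite lee_fin hfun_ge0.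
- move=> S mS; pose A' := fun i => if i == J then S else A i.
  have mA' : forall i, measurable (A' i) by move=> i; rewrite /A'; case: ifP.
  have := IH (ltnW jn) A' mA'.
  have sp' (y : 'I_n -> R) : \prod_(i < n) hfun g j A' i (y i) =
      \1_S (y J) * \prod_(i < n | i != J) hfun g j A i (y i).
    rewrite (bigD1 J) //=; congr (_ * _); first by rewrite /hfun /= ltnn /A' eqxx.
    by apply: eq_bigr => i ne; rewrite /hfun /A' (negbTE ne).
  have sk : (\prod_(i < n) \int[k]_x (hfun g j A' i x)%:E =
      k S * \prod_(i < n | i != J) \int[k]_x (hfun g j A i x)%:E)%E.
    rewrite (bigD1 J) //=; congr (_ * _)%E.
      by rewrite /hfun /= ltnn /A' eqxx integral_indic // setIT.
    by apply: eq_bigr => i ne; rewrite /hfun /A' (negbTE ne).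
  rewrite sk.
  move=> H; apply: le_trans H; rewrite le_eqVlt; apply/orP; left; apply/eqP.
  by apply: eq_integral => w _; rewrite (sp' (fun i => X i w)).
- exact: mg.
- exact: g0.
Qed.
Lemma mfabs (R : realType) (f : R -> R) : {within `[0, +oo[, continuous f} ->
  measurable_fun setT (fun x : R => f `|x|).
Proof.
move=> cf.
pose D : set R := `[0, +oo[%classic.
have mD : measurable D by exact: measurable_itv.
have mf : measurable_fun D f.
  by apply: subspace_continuous_measurable_fun => //.
have := measurable_comp mD _ mf (@normr_measurable R setT).
apply.
by move=> _ [x _ <-]; rewrite /D /= in_itv /= andbT.
Qed.

From mathcomp Require Import ring lra.

Lemma ev (R : realType) n (y : 'I_n -> R) (u : R) : (0 < n)%N ->
  (forall i, 0 <= y i) ->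
  ((u%:E <= (n%:R^-1)%:E * \sum_(i < n) lne (y i)%:E)%E) =
  (expR (n%:R * u) <= \prod_(i < n) y i).
Proof.
move=> n0 y0.
have npos : 0 < n%:R :> R by rewrite ltr0n.
case: (pselect (forall i, 0 < y i)) => [pos|npos'].
  have -> : (\sum_(i < n) lne (y i)%:E = (\sum_(i < n) ln (y i))%:E)%E.
    by rewrite -sumEFin; apply: eq_bigr => i _; rewrite lne_EFin.
  have -> : \prod_(i < n) y i = expR (\sum_(i < n) ln (y i)).
    by rewrite expR_sum; apply: eq_bigr => i _; rewrite lnK // posrE.
  rewrite -EFinM lee_fin ler_expR.
  by rewrite -(ler_pM2l npos) mulrA mulfV ?mul1r // gt_eqF.
have [j yj] : exists j, y j = 0.
  apply: contrapT => H; apply: npos' => i; rewrite lt_neqAle y0 andbT eq_sym.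
  by apply/eqP => h; apply: H; exists i.
have -> : \prod_(i < n) y i = 0 by rewrite (bigD1 j) //= yj mul0r.
rewrite (bigD1 j) //= yj lexx addNye gt0_muleNy ?lte_fin ?invr_gt0 //.
rewrite leeNy_eq /=.
by apply/esym/negbTE; rewrite -ltNge expR_gt0.
Qed.

Lemma intg_le1 (R : realType) (f : R -> R) B (k : probability R R) (l1 l2 : R) :
  admissible_f f -> in_L f B k -> 0 <= l2 ->
  (\int[k]_x (1 - (x - mean k) * l1 - (B - f `|x|) * l2)%:E <= 1)%E.
Proof.
move=> [_ cf f0 _ _] [ix iB] l20.
set m := mean k.
have mf := @mfabs R f cf.
have fa0 x : 0 <= f `|x| by apply: f0.
have ifx : k.-integrable setT (fun x => (f `|x|)%:E).
  apply/integrableP; split; first exact/measurable_EFinP.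
  under eq_integral do rewrite gee0_abs ?lee_fin //.
  by apply: (le_lt_trans iB); rewrite ltry.
pose a := 1 + m * l1 - B * l2.
have ic : k.-integrable setT (fun _ : R => a%:E).
  exact: (finite_measure_integrable_cst k a measurableT).
have ix' : k.-integrable setT (fun x : R => (- l1)%:E * x%:E)%E.
  exact: integrableZl.
have ifx' : k.-integrable setT (fun x : R => l2%:E * (f `|x|)%:E)%E.
  exact: integrableZl.
have eqg x : (1 - (x - m) * l1 - (B - f `|x|) * l2)%:E =
    (a%:E + (- l1)%:E * x%:E + l2%:E * (f `|x|)%:E)%E.
  by rewrite -!EFinM -!EFinD /a; congr EFin; ring.
under eq_integral => x _ do rewrite eqg.
rewrite integralD //; last exact: integrableD.
rewrite integralD // integral_cst //.
rewrite [X in (a%:E * X)%E](_ : _ = 1%E); last exact: probability_setT.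
rewrite mule1.
rewrite integralZl // integralZl //.
have hm : (\int[k]_x x%:E)%E = m%:E.
  by rewrite /m /mean fineK //; exact: (integrable_fin_num measurableT ix).
rewrite hm.
have fI : (\int[k]_x (f `|x|)%:E)%E \is a fin_num by exact: integrable_fin_num.
rewrite -(fineK fI) -!EFinM -!EFinD lee_fin.
move: iB; rewrite -(fineK fI) lee_fin => iB.
rewrite /a.
have : l2 * fine (\int[k]_x (f `|x|)%:E)%E <= l2 * B by rewrite ler_wpM2l.
lra.
Qed.

Theorem lemma27 (R : realType) (f : R -> R) (B : R) (k : probability R R)
    (l1 l2 u : R) (d : measure_display) (T : measurableType d)
    (P : probability T R) (n : nat) (X : 'I_n -> T -> R) :
  admissible_f f -> 0 < B -> in_L f B k ->
  0 < l1 -> 0 < l2 -> in_R2 f B k l1 l2 -> 0 <= u ->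
  (0 < n)%N -> iid_with_law P X k ->
  (P [set w | (u%:E <= Lemp f B l1 l2 (mean k) (fun i => X i w))%E]
     <= (expR (- (n%:R * u)))%:E)%E.
Proof.
move=> adm B0 inL l1p l2p [_ _ R2] u0 n0 [mX hlaw hind].
have cf : {within `[0, +oo[, continuous f} by case: adm.
set m := mean k.
pose g x := 1 - (x - m) * l1 - (B - f `|x|) * l2.
have g0 x : 0 <= g x by exact: R2.
have mg : measurable_fun setT g.
  apply: measurable_funB.
  - apply: measurable_funB; first exact: measurable_cst.
    apply: measurable_funM; last exact: measurable_cst.
    apply: measurable_funB; [exact: measurable_id | exact: measurable_cst].
  - apply: measurable_funM; last exact: measurable_cst.
    apply: measurable_funB; [exact: measurable_cst | exact: (@mfabs R f cf)].
pose c := expR (n%:R * u).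
pose F w := \prod_(i < n) g (X i w).
have F0 w : 0 <= F w by apply: prodr_ge0 => i _.
have mF : measurable_fun setT F.
  by apply: measurable_prod => i _; apply: measurableT_comp.
have Eeq : [set w | (u%:E <= Lemp f B l1 l2 m (fun i => X i w))%E] =
    [set w | c <= F w].
  apply/seteqP; split => w /=.
    by rewrite /Lemp (@ev R n (fun i => g (X i w)) u n0 (fun i => g0 _)).
  by rewrite /Lemp (@ev R n (fun i => g (X i w)) u n0 (fun i => g0 _)).
have mE : measurable [set w | c <= F w].
  rewrite (_ : [set w | c <= F w] = F @^-1` `[c, +oo[%classic).
    by rewrite -[_ @^-1` _]setTI; apply: mF => //; exact: measurable_itv.
  by apply/seteqP; split => w /=; rewrite in_itv /= andbT.
rewrite Eeq.
have hint : (\int[P]_w (F w)%:E <= 1)%E.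
  pose A0 := fun _ : 'I_n => [set: R].
  have := @indep_le R d T P n X k g mX hlaw hind mg g0 n (leqnn n) A0 (fun _ => measurableT).
  have hn i x : hfun g n A0 i x = g x by rewrite /hfun ltn_ord.
  have -> : (\int[P]_w (\prod_(i < n) hfun g n A0 i (X i w))%:E)%E = (\int[P]_w (F w)%:E)%E.
    by apply: eq_integral => w _; congr EFin; apply: eq_bigr => i _; rewrite hn.
  have -> : (\prod_(i < n) \int[k]_x (hfun g n A0 i x)%:E = \prod_(i < n) \int[k]_x (g x)%:E)%E.
    by apply: eq_bigr => i _; apply: eq_integral => x _; rewrite hn.
  move/le_trans; apply.
  have hk : (0 <= \int[k]_x (g x)%:E <= 1)%E.
    rewrite integral_ge0 /=; last by move=> x _; rewrite lee_fin.
    by case: inL => ? ?; apply: intg_le1 => //; exact: ltW.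
  have : (0 <= \prod_(i < n) \int[k]_x (g x)%:E <= 1)%E.
    apply: (big_ind (fun x => (0 <= x <= 1)%E)) => //=.
    - by rewrite lee01 lexx.
    - move=> x y /andP[x0 x1] /andP[y0 y1]; rewrite mule_ge0 //=.
      by rewrite -[1%E]mule1; apply: lee_pmul.
  by case/andP.
set E := [set w | c <= F w].
have key : (c%:E * P E <= 1)%E.
  apply: le_trans hint.
  have <- : (\int[P]_w (\1_E w)%:E = P E)%E.
    by rewrite integral_indic // setIT.
  rewrite -ge0_integralZl_EFin //; try (by move=> w _; rewrite lee_fin indicE);
    try (by apply/measurable_EFinP; exact: measurable_indic);
    try (exact/ltW/expR_gt0).
  apply: ge0_le_integral => //.
  - by move=> w _; rewrite -EFinM lee_fin indicE mulr_ge0 // ltW // expR_gt0.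
  - have -> : (fun x : T => (c%:E * (\1_E x)%:E)%E) = EFin \o (fun x => c * \1_E x).
      by apply/funext => x; rewrite /= EFinM.
    by apply/measurable_EFinP; apply: measurable_funM; [exact: measurable_cst|exact: measurable_indic].
  - exact/measurable_EFinP.
  - move=> w _; rewrite -EFinM lee_fin indicE.
    case: (boolP (w \in E)) => h /=.
      by rewrite mulr1; move/set_mem : h.
    by rewrite mulr0.
have -> : P E =
    ((expR (- (n%:R * u)))%:E * (c%:E * P E))%E.
  by rewrite muleA -EFinM expRN mulVf ?mul1e // gt_eqF // expR_gt0.
rewrite -[X in (_ <= X)%E]mule1; apply: lee_wpmul2l => //; rewrite lee_fin; exact/ltW/expR_gt0.
Qed.
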